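(* Let $n,m\ge 2$ be integers and $P_n,P_m$ paths on $n$ and $m$ vertices. Then $AT(P_n+_R P_m)=3$.
   Context: For an orientation $D$, a subdigraph is Eulerian if every vertex has equal in- and outdegree in it; $D$ is an AT-orientation if the numbers of Eulerian subgraphs with an even and with an odd number of arcs differ; $AT(G)$ is the smallest $k$ such that $G$ has an AT-orientation of maximum outdegree at most $k-1$. $R(G)$ has vertex set $V(G)\cup E(G)$ and consists of $G$ together with, for each edge $e=xy$, a new vertex $e$ adjacent to $x$ and $y$. $G+_R H$ has vertex set $(V(G)\cup E(G))\times V(H)$, with $(u_1,u_2)\sim(v_1,v_2)$ iff [$u_1=v_1\in V(G)$ and $u_2v_2\in E(H)$] or [$u_2=v_2$ and $u_1v_1\in E(R(G))$]. *)

(* Defs.v *)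
From mathcomp Require Import all_boot.
Set Implicit Arguments. Unset Strict Implicit. Unset Printing Implicit Defensive.

(* A (simple) graph is a finite vertex type V with a symmetric irreflexive
   adjacency relation adj : rel V. *)

(* D : rel V (D x y = "arc x -> y") is an orientation of adj. *)
Definition is_orientation (V : finType) (adj D : rel V) : Prop :=
  (forall x y, D x y -> adj x y) /\ (forall x y, adj x y -> D x y (+) D y x).

Definition outdeg (V : finType) (D : rel V) (v : V) : nat := #|[set y | D v y]|.

Definition eulerian_sub (V : finType) (D : rel V) (A : {set V * V}) : bool :=
  [forall a in A, D a.1 a.2] &&
  [forall v, #|[set a in A | a.1 == v]| == #|[set a in A | a.2 == v]|].

Definition even_eulerian (V : finType) (D : rel V) : {set {set V * V}} :=
  [set A | eulerian_sub D A & ~~ odd #|A|].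
Definition odd_eulerian (V : finType) (D : rel V) : {set {set V * V}} :=
  [set A | eulerian_sub D A & odd #|A|].

Definition AT_orientation (V : finType) (D : rel V) : Prop :=
  #|even_eulerian D| <> #|odd_eulerian D|.

Definition has_AT_orientation (V : finType) (adj : rel V) (k : nat) : Prop :=
  exists D : rel V, is_orientation adj D /\ AT_orientation D /\
    forall v, outdeg D v < k.

Definition AT_eq (V : finType) (adj : rel V) (k : nat) : Prop :=
  has_AT_orientation adj k /\ forall j, j < k -> ~ has_AT_orientation adj j.

Definition is_edge (V : finType) (adj : rel V) (e : {set V}) : bool :=
  [exists x, exists y, adj x y && (e == [set x; y])].

Definition edge_type (V : finType) (adj : rel V) : finType :=
  {e : {set V} | is_edge adj e}.

Definition R_vert (V : finType) (adj : rel V) : finType :=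
  (V + edge_type adj)%type.

Definition R_adj (V : finType) (adj : rel V) : rel (R_vert adj) :=
  fun u v =>
    match u, v with
    | inl x, inl y => adj x y
    | inl x, inr e => x \in val e
    | inr e, inl x => x \in val e
    | inr _, inr _ => false
    end.

Definition Rsum_vert (V W : finType) (adjG : rel V) : finType :=
  (R_vert adjG * W)%type.

Definition Rsum_adj (V W : finType) (adjG : rel V) (adjH : rel W)
  : rel (Rsum_vert W adjG) :=
  fun u v =>
    (match u.1, v.1 with
     | inl x, inl y => (x == y) && adjH u.2 v.2
     | _, _ => false
     end)
    || ((u.2 == v.2) && R_adj u.1 v.1).

Definition path_adj (n : nat) : rel 'I_n :=
  fun i j => (i.+1 == j :> nat) || (j.+1 == i :> nat).

(* Main.v *)
Require Import Defs.
From mathcomp Require Import all_boot zify.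

Lemma acyc_eul (T : finType) (D : rel T) (r : T -> nat)
  (Hr : forall x y, D x y -> r y < r x) (A : {set T * T}) :
  eulerian_sub D A -> A = set0.
Proof.
move/andP=> [/forall_inP HD /forallP Hc].
apply/eqP/negPn/negP => /set0Pn [a0 Ha0].
case: (arg_minnP (fun a : T * T => r a.2) Ha0) => a1 Ha1 Hmin.
have h := eqP (Hc a1.2).
have : 0 < #|[set a in A | a.2 == a1.2]|.
  by apply/card_gt0P; exists a1; rewrite inE eqxx andbT.
rewrite -h => /card_gt0P [a2]; rewrite inE => /andP [Ha2 /eqP e2].
have := Hr _ _ (HD _ Ha2); rewrite e2 => lt.
by have := Hmin _ Ha2; rewrite leqNgt lt.
Qed.

Lemma acyc_AT (T : finType) (D : rel T) (r : T -> nat)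
  (Hr : forall x y, D x y -> r y < r x) : AT_orientation D.
Proof.
rewrite /AT_orientation.
have -> : odd_eulerian D = set0.
  apply/setP => A; rewrite !inE; apply/negbTE/negP => /andP [HA].
  by rewrite (@acyc_eul _ _ _ Hr _ HA) cards0.
rewrite cards0 => H0.
have : 0 < #|even_eulerian D|.
  apply/card_gt0P; exists set0; rewrite !inE cards0 andbT.
apply/andP; split; apply/forallP => x; first by rewrite inE.
by rewrite !(eq_card0 (fun a => _)) //; move=> a; rewrite !inE.
by rewrite H0.
Qed.

Lemma two_out (T : finType) (D : rel T) v y1 y2 :
  outdeg D v < 2 -> D v y1 -> D v y2 -> y1 = y2.
Proof.
move=> ho h1 h2; apply/eqP/negPn/negP => ne.
have : #|[set y1; y2]| <= outdeg D v.
  by apply: subset_leq_card; apply/subsetP => y; rewrite !inE => /orP [] /eqP ->.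
by rewrite cards2 ne; move: ho; case: (outdeg D v) => [|[|]].
Qed.

Lemma five (T : finType) (D : rel T) (a b c d f : T) :
  uniq [:: a; b; c; d; f] -> (forall v, outdeg D v < 2) ->
  D a b || D b a -> D a c || D c a -> D b c || D c b ->
  D a d || D d a -> D b f || D f b -> D d f || D f d -> False.
Proof.
move=> Hu ho h1 h2 h3 h4 h5 h6.
case/orP: h1 => h1; case/orP: h2 => h2; case/orP: h3 => h3;
case/orP: h4 => h4; case/orP: h5 => h5; case/orP: h6 => h6;
match goal with H1 : is_true (D ?v ?y1), H2 : is_true (D ?v ?y2) |- _ =>
  tryif constr_eq y1 y2 then fail else
  (have E := @two_out _ _ _ _ _ (ho v) H1 H2; subst; move: Hu; rewrite /= !inE !eqxx /= ?orbT ?andbF //)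
end.
Qed.

Section G.
Variables n m : nat.
Notation VV := (Rsum_vert 'I_m (@path_adj n)).
Notation adj := (@Rsum_adj _ _ (@path_adj n) (@path_adj m)).

Definition rk (u : VV) : nat :=
  match u.1 with inl x => x + u.2 | inr _ => n + m end.

Definition Dor : rel VV := fun u v => adj u v && (rk v < rk u).

Lemma adj_sym u v : adj u v = adj v u.
Proof.
case: u => [[x|e] j]; case: v => [[y|f] k];
rewrite /Rsum_adj /R_adj /path_adj /= ?[k == j]eq_sym ?[y == x]eq_sym //.
by rewrite [(k.+1 == _) || _]orbC [(y.+1 == _) || _]orbC.
Qed.

Lemma adj_rk u v : adj u v -> rk u != rk v.
Proof.
case: u => [[x|e] j]; case: v => [[y|f] k];
rewrite /Rsum_adj /R_adj /path_adj /rk /=.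
- case/orP => /andP [/eqP a b]; move: b; rewrite ?a => /orP [] /eqP b; lia.
- move=> _; have := ltn_ord x; have := ltn_ord j; lia.
- move=> _; have := ltn_ord y; have := ltn_ord k; lia.
- by rewrite andbF.
Qed.

Lemma Dor_orient : is_orientation adj Dor.
Proof.
split; first by move=> x y /andP [].
move=> x y h; rewrite /Dor h -adj_sym h /=.
have := @adj_rk _ _ h; case: ltngtP => //.
Qed.

Lemma Dor_lt x y : Dor x y -> rk y < rk x.
Proof. by case/andP. Qed.
End G.

Section G2.
Variables n m : nat.
Notation VV := (Rsum_vert 'I_m (@path_adj n)).

Lemma grid_out (i x : 'I_n) (j k : 'I_m) :
  @Dor n m (inl i, j) (inl x, k) -> (x = i :> nat /\ k.+1 = j :> nat) \/ (k = j :> nat /\ x.+1 = i :> nat).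
Proof.
rewrite /Dor /Rsum_adj /R_adj /path_adj /rk /=.
case/andP => /orP [] /andP [/eqP e h] lt; move: h lt.
- subst x; case/orP => /eqP h lt; left; split => //; lia.
- subst k; case/orP => /eqP h lt; right; split => //; lia.
Qed.

Lemma grid_inr (i : 'I_n) j e k : @Dor n m (inl i, j) (inr e, k) -> False.
Proof.
by rewrite /Dor /rk /= => /andP [_]; have := ltn_ord i; have := ltn_ord j; lia.
Qed.

Lemma out_le2 (v : VV) : outdeg (@Dor n m) v < 3.
Proof.
rewrite /outdeg; case: v => [[i|e] j].
- suff H : {in [set y | @Dor n m (inl i, j) y] &, injective (fun y : VV => y.2 == j)}.
    by apply: leq_ltn_trans (@leq_card_in _ _ _ _ H) _; rewrite card_bool.
  move=> [[x1|e1] k1] [[x2|e2] k2]; rewrite !inE /=; last first.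
  + by move=> /grid_inr.
  + by move=> /grid_inr.
  + by move=> _ /grid_inr.
  move=> /grid_out h1 /grid_out h2 heq.
  have [ex ek] : x1 = x2 /\ k1 = k2.
    have E1 : (k1 == j) = (k1 == j :> nat) by [].
    have E2 : (k2 == j) = (k2 == j :> nat) by [].
    move: heq; rewrite E1 E2.
    case: h1 h2 => -[a b] [] [c d];
    (case: eqP => ?; case: eqP => ? h); try discriminate h;
    split; apply: ord_inj; lia.
  by rewrite ex ek.
- case: e => e /= He.
  have [a [b Ee]] : exists a b, e = [set a; b].
    by case/existsP: He => a /existsP [b /andP [_ /eqP ->]]; exists a, b.
  suff H : {in [set y | @Dor n m (inr (exist _ e He), j) y] &, injective (fun y : VV => y.1 == inl a)}.
    by apply: leq_ltn_trans (@leq_card_in _ _ _ _ H) _; rewrite card_bool.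
  move=> [[x1|e1] k1] [[x2|e2] k2]; rewrite !inE /Dor /Rsum_adj /R_adj /rk /= ?andbF //.
  rewrite Ee !inE.
  case/andP => /andP [/eqP <- h1] _ /andP [/andP [/eqP <- h2] _] /eqP heq.
  congr (_, _); move: heq h1 h2.
  case: eqP => [[->] [->] //|ne1].
  move=> ne2 /orP [] /eqP e1 /orP [] /eqP e2; subst => //.

Qed.
End G2.

Lemma orient_or (T : finType) (adj D : rel T) x y :
  is_orientation adj D -> adj x y -> D x y || D y x.
Proof. by case=> _ h /h; case: (D x y); case: (D y x). Qed.

Theorem corollary3p7 (n m : nat) :
  2 <= n -> 2 <= m ->
  AT_eq (@Rsum_adj 'I_n 'I_m (@path_adj n) (@path_adj m)) 3.
Proof.
move=> hn hm; split.
  exists (@Dor n m); split; first exact: Dor_orient.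
  split; last exact: out_le2.
  exact: (@acyc_AT _ _ (@rk n m) (@Dor_lt n m)).
move=> k hk [D [Ho [_ Hout]]].
have ho : forall v, outdeg D v < 2 by move=> v; apply: leq_trans (Hout v) _.
case: n hn D Ho Hout ho => [|[|n]] // _ D Ho Hout ho.
case: m D Ho Hout ho hm => [|[|m]] // D Ho Hout ho _.
pose i0 : 'I_n.+2 := ord0.
pose i1 : 'I_n.+2 := @Ordinal n.+2 1 isT.
pose j0 : 'I_m.+2 := ord0.
pose j1 : 'I_m.+2 := @Ordinal m.+2 1 isT.
have He : is_edge (@path_adj n.+2) [set i0; i1].
  by apply/existsP; exists i0; apply/existsP; exists i1; rewrite eqxx.
pose e : edge_type (@path_adj n.+2) := exist (fun s => is_edge (@path_adj n.+2) s) _ He.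
apply: (@five _ D (inl i0, j0) (inl i1, j0) (inr e, j0) (inl i0, j1) (inl i1, j1)) => //;
  apply: (@orient_or _ _ _ _ _ Ho); rewrite /Rsum_adj /= ?inE ?eqxx ?orbT //.
Qed.
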